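(* Consider a discounted Markov decision process with finite state space $\mathcal S$, finite action space $\mathcal A$, transition probabilities $\mathcal P(s'\mid s,a)$, reward function $R:\mathcal S\times\mathcal A\to[0,1]$, discount factor $\gamma\in[0,1)$ and initial state distribution $p$. For a policy $\pi\in\mathcal X:=\Delta(\mathcal A)^{|\mathcal S|}$ (viewed as a matrix $(\pi_{sa})\in\mathbb R^{|\mathcal S|\times|\mathcal A|}$ whose rows $\pi_s$ are probability vectors), let $V_p(\pi):=-\mathbb E\big[\sum_{h=0}^\infty\gamma^hR(s_h,a_h)\big]$, where $s_0\sim p$, $a_h\sim\pi_{s_h}$, $s_{h+1}\sim\mathcal P(\cdot\mid s_h,a_h)$. Then for any $\pi,\pi'\in\mathcal X$, $$\|\nabla V_p(\pi)-\nabla V_p(\pi')\|_{2,\infty}\le\frac{2\gamma}{(1-\gamma)^3}\|\pi-\pi'\|_{2,1}.$$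
   Context: For a matrix $M\in\mathbb R^{|\mathcal S|\times|\mathcal A|}$: $\|M\|_{2,1}^2:=\sum_{s\in\mathcal S}\big(\sum_{a\in\mathcal A}|M_{sa}|\big)^2$ and $\|M\|_{2,\infty}^2:=\sum_{s\in\mathcal S}\big(\max_{a\in\mathcal A}|M_{sa}|\big)^2$. $\Delta(\mathcal A)$ is the probability simplex on $\mathcal A$; $\nabla V_p(\pi)$ is the gradient with respect to the entries $\pi_{sa}$. *)

(* Defs.v *)
From HB Require Import structures.
From mathcomp Require Import all_boot all_order all_algebra.
From mathcomp Require Import all_classical all_reals all_analysis.
Set Implicit Arguments. Unset Strict Implicit. Unset Printing Implicit Defensive.
Import Order.TTheory GRing.Theory Num.Theory.
Import numFieldNormedType.Exports.
Local Open Scope ring_scope.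

Section MDP.
Variables (R : realType) (nS nA : nat).

(* transition kernel P s a s' = P(s' | s, a) *)
Definition is_kernel (P : 'I_nS -> 'I_nA -> 'I_nS -> R) : Prop :=
  (forall s a s', 0 <= P s a s') /\ (forall s a, \sum_(s' < nS) P s a s' = 1).

Definition is_distr (p : 'rV[R]_nS) : Prop :=
  (forall s, 0 <= p 0 s) /\ \sum_(s < nS) p 0 s = 1.

Definition is_policy (pi : 'M[R]_(nS, nA)) : Prop :=
  (forall s a, 0 <= pi s a) /\ (forall s, \sum_(a < nA) pi s a = 1).

Definition Ppi (P : 'I_nS -> 'I_nA -> 'I_nS -> R) (pi : 'M[R]_(nS, nA)) : 'M[R]_nS :=
  \matrix_(s, s') \sum_(a < nA) pi s a * P s a s'.

Definition rpi (Rw : 'I_nS -> 'I_nA -> R) (pi : 'M[R]_(nS, nA)) : 'cV[R]_nS :=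
  \col_s \sum_(a < nA) pi s a * Rw s a.

(* E[R(s_h,a_h)] = p (P_pi)^h r_pi ; V_p(pi) = - sum_h gamma^h E[R(s_h,a_h)].
   Defined by the same formula for every matrix pi, so that partial
   derivatives in the entries pi_sa make sense. *)
Definition Vp (P : 'I_nS -> 'I_nA -> 'I_nS -> R) (Rw : 'I_nS -> 'I_nA -> R)
  (gamma : R) (p : 'rV[R]_nS) (pi : 'M[R]_(nS, nA)) : R :=
  let u : R ^nat := fun h : nat => gamma ^+ h * (p *m (Ppi P pi) ^+ h *m rpi Rw pi) 0 0 in
  - limn (series u).

Definition gradVp P Rw gamma p (pi : 'M[R]_(nS, nA)) : 'M[R]_(nS, nA) :=
  \matrix_(s, a) derive1 (fun t : R => Vp P Rw gamma p (pi + t *: delta_mx s a)) 0.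

Definition norm21 (M : 'M[R]_(nS, nA)) : R :=
  Num.sqrt (\sum_(s < nS) (\sum_(a < nA) `|M s a|) ^+ 2).

Definition norm2inf (M : 'M[R]_(nS, nA)) : R :=
  Num.sqrt (\sum_(s < nS) (\big[Num.max/0]_(a < nA) `|M s a|) ^+ 2).

End MDP.

(* Main.v *)
Require Import Defs.
From HB Require Import structures.
From mathcomp Require Import all_boot all_order all_algebra.
From mathcomp Require Import all_classical all_reals all_analysis.
From mathcomp Require Import ring lra.
Import Order.TTheory GRing.Theory Num.Theory.
Import numFieldNormedType.Exports.
Local Open Scope ring_scope.
Set Implicit Arguments. Unset Strict Implicit.
Section Contract.
Variables (R : realType) (n : nat).

Definition stoch (A : 'M[R]_n) :=
  (forall i j, 0 <= A i j) /\ (forall i, \sum_j A i j = 1).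

Lemma row_contract (A : 'M[R]_n) (g : R) (e y : 'rV[R]_n) :
  stoch A -> 0 <= g -> g < 1 -> e = y + g *: (e *m A) ->
  \sum_j `|e 0 j| <= (\sum_j `|y 0 j|) / (1 - g).
Proof.
move=> [A0 A1] g0 g1 He.
have He' : forall j, e 0 j = y 0 j + g * \sum_i e 0 i * A i j.
  by move=> j; rewrite {1}He !mxE.
have H : \sum_j `|e 0 j| <= \sum_j `|y 0 j| + g * \sum_j `|e 0 j|.
  rewrite [X in X <= _](eq_bigr _ (fun j _ => congr1 Num.norm (He' j))).
  apply: le_trans (ler_sum _ (fun j _ => ler_normD _ _)) _.
  rewrite big_split /= lerD2l.
  have -> : g * \sum_j `|e 0 j| = \sum_j g * \sum_i `|e 0 i| * A i j.
    rewrite -mulr_sumr exchange_big /=; congr (g * _).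
    by apply: eq_bigr => i _; rewrite -mulr_sumr A1 mulr1.
  apply: ler_sum => j _.
  rewrite normrM (ger0_norm g0) ler_wpM2l //.
  apply: le_trans (ler_norm_sum _ _ _) _.
  apply: ler_sum => i _; rewrite normrM (ger0_norm (A0 i j)) //.
rewrite ler_pdivlMr ?subr_gt0 //.
rewrite mulrBr mulr1 lerBlDr.
by rewrite mulrC.
Qed.

Lemma col_contract (A : 'M[R]_n) (g B : R) (u z : 'cV[R]_n) :
  stoch A -> 0 <= g -> g < 1 -> 0 <= B -> (forall i, `|z i 0| <= B) ->
  u = z + g *: (A *m u) ->
  forall i, `|u i 0| <= B / (1 - g).
Proof.
move=> [A0 A1] g0 g1 B0 zB He.
set M := \big[Num.max/0]_i `|u i 0|.
have uM : forall i, `|u i 0| <= M by move=> i; exact: le_bigmax.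
have M0 : 0 <= M.
  by rewrite /M; elim/big_ind: _ => // x y x0 y0; rewrite le_max x0.
have H : M <= B + g * M.
  apply: bigmax_le; first by rewrite addr_ge0 // mulr_ge0.
  move=> i _; rewrite {1}He !mxE.
  apply: le_trans (ler_normD _ _) _; apply: lerD => //.
  rewrite normrM (ger0_norm g0) ler_wpM2l //.
  apply: le_trans (ler_norm_sum _ _ _) _.
  have -> : M = \sum_j A i j * M by rewrite -mulr_suml A1 mul1r.
  apply: ler_sum => j _; rewrite normrM (ger0_norm (A0 i j)) ler_wpM2l //.
move=> i; apply: le_trans (uM i) _.
rewrite ler_pdivlMr ?subr_gt0 // mulrBr mulr1 lerBlDr.
by rewrite mulrC.
Qed.

Lemma unit_IgA (A : 'M[R]_n) (g : R) :
  stoch A -> 0 <= g -> g < 1 -> (1%:M - g *: A) \in unitmx.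
Proof.
move=> sA g0 g1.
rewrite -row_free_unit -kermx_eq0.
set K := kermx _.
apply/eqP/matrixP => i j; rewrite [RHS]mxE.
have Hx : row i K *m (1%:M - g *: A) = 0 by rewrite -row_mul mulmx_ker row0.
set x := row i K in Hx.
have Hx' : x = 0 + g *: (x *m A).
  by move: Hx; rewrite mulmxBr mulmx1 scalemxAr add0r => /eqP; rewrite subr_eq0 => /eqP.
have := row_contract sA g0 g1 Hx'.
rewrite [X in _ <= X / _]big1; last by move=> k _; rewrite !mxE normr0.
rewrite mul0r => Hs.
have Hs0 : \sum_k `|x 0 k| = 0 by apply/eqP; rewrite eq_le Hs sumr_ge0.
have := @psumr_eq0P _ _ _ _ (fun k _ => normr_ge0 (x 0 k)) Hs0 j isT.
by move/normr0_eq0; rewrite /x mxE.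
Qed.

End Contract.

Section Series.
Variables (R : realType) (n : nat).

Lemma le_sum_term (F : 'I_n -> R) i : (forall k, 0 <= F k) -> F i <= \sum_k F k.
Proof.
move=> F0; rewrite (bigD1 i) //= lerDl; exact: sumr_ge0.
Qed.

Lemma rowsum_mul (B : 'M[R]_n) (b : R) (x : 'rV[R]_n) :
  (forall i, \sum_j `|B i j| <= b) ->
  \sum_j `|(x *m B) 0 j| <= b * \sum_i `|x 0 i|.
Proof.
move=> Bb.
apply: le_trans (_ : \sum_j \sum_i `|x 0 i| * `|B i j| <= _).
  apply: ler_sum => j _; rewrite mxE.
  apply: le_trans (ler_norm_sum _ _ _) _.
  by apply: ler_sum => i _; rewrite normrM.
rewrite exchange_big /= mulr_sumr; apply: ler_sum => i _.
by rewrite -mulr_sumr mulrC ler_wpM2r.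
Qed.

Lemma rv_cv_bound (x : 'rV[R]_n) (w : 'cV[R]_n) :
  `|(x *m w) 0 0| <= (\sum_i `|x 0 i|) * (\sum_i `|w i 0|).
Proof.
rewrite mxE; apply: le_trans (ler_norm_sum _ _ _) _.
rewrite mulr_suml; apply: ler_sum => i _; rewrite normrM ler_wpM2l //.
exact: (@le_sum_term (fun k => `|w k 0|) i (fun k => normr_ge0 _)).
Qed.

Lemma geom_sum_mx (B : 'M[R]_n) (k : nat) :
  (\sum_(h < k) B ^+ h) *m (1%:M - B) = 1%:M - B ^+ k.
Proof.
elim: k => [|k IH]; first by rewrite big_ord0 mul0mx expr0 subrr.
rewrite big_ord_recr /= mulmxDl IH mulmxBr mulmx1.
rewrite exprSr mulmxE.
by rewrite addrA subrK.
Qed.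

Lemma exprZ_mx (B : 'M[R]_n) (g : R) k : (g *: B) ^+ k = g ^+ k *: B ^+ k.
Proof.
elim: k => [|k IH]; first by rewrite !expr0 scale1r.
by rewrite !exprSr -!mulmxE IH -scalemxAl -scalemxAr scalerA.
Qed.

Lemma series_lim (B : 'M[R]_n) (g b : R) (p : 'rV[R]_n) (r : 'cV[R]_n) (Y : 'M[R]_n) :
  0 <= g -> (forall i, \sum_j `|B i j| <= b) -> 0 <= b -> g * b < 1 ->
  (1%:M - g *: B) *m Y = 1%:M ->
  limn (series (fun h : nat => g ^+ h * (p *m B ^+ h *m r) 0 0)) = (p *m Y *m r) 0 0.
Proof.
move=> g0 Bb b0 gb1 HY.
set w := Y *m r.
have Eser : forall k, series (fun h : nat => g ^+ h * (p *m B ^+ h *m r) 0 0) k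
   = (p *m Y *m r) 0 0 - (p *m (g *: B) ^+ k *m w) 0 0.
  move=> k; rewrite seriesEord /=.
  have -> : \sum_(h < k) g ^+ h * (p *m B ^+ h *m r) 0 0
      = (p *m (\sum_(h < k) (g *: B) ^+ h) *m r) 0 0.
    rewrite mulmx_sumr mulmx_suml summxE; apply: eq_bigr => h _.
    by rewrite exprZ_mx -scalemxAr -scalemxAl [RHS]mxE.
  have -> : \sum_(h < k) (g *: B) ^+ h = (1%:M - (g *: B) ^+ k) *m Y.
    by rewrite -[LHS]mulmx1 -{1}HY mulmxA geom_sum_mx.
  by rewrite mulmxBl mul1mx mulmxBr mulmxBl /w !mulmxA !mxE.
have Hb : forall k, `|(p *m (g *: B) ^+ k *m w) 0 0|
     <= (g * b) ^+ k * ((\sum_i `|p 0 i|) * (\sum_i `|w i 0|)).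
  move=> k; apply: le_trans (rv_cv_bound _ _) _.
  rewrite mulrA ler_wpM2r ?sumr_ge0 //.
  elim: k => [|k IH]; first by rewrite expr0 mulmx1 mul1r.
  rewrite exprSr -mulmxE mulmxA.
  apply: le_trans (rowsum_mul (b := g * b) _ _) _.
    move=> i; under eq_bigr => j _ do rewrite mxE normrM (ger0_norm g0).
    by rewrite -mulr_sumr ler_wpM2l.
  by rewrite exprSr [_ ^+ k * _]mulrC -[X in _ <= X]mulrA ler_wpM2l ?mulr_ge0.
have gbn : `|g * b| < 1 by rewrite ger0_norm // mulr_ge0.
have C0 := cvg_expr gbn.
set C := (\sum_i `|p 0 i|) * (\sum_i `|w i 0|).
have T0 : ((fun k => (p *m (g *: B) ^+ k *m w) 0 0) @ \oo --> (0:R))%classic.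
  apply: (@squeeze_cvgr _ _ _ _ (fun k => - ((g * b) ^+ k * C)) (fun k => (g * b) ^+ k * C)).
  - near=> k; have := Hb k; rewrite -/C ler_norml => /andP[H1 H2].
    by rewrite H1 H2.
  - rewrite -oppr0 -(mul0r C); apply: cvgN; exact: cvgMr_tmp.
  - rewrite -(mul0r C); exact: cvgMr_tmp.
apply/cvg_lim => //.
rewrite (_ : series _ = (fun k => (p *m Y *m r) 0 0 - (p *m (g *: B) ^+ k *m w) 0 0)); last first.
  by apply/funext => k; rewrite Eser.
rewrite -[X in (_ --> X)%classic]subr0.
apply: cvgB => //; exact: cvg_cst.
Unshelve. all: by end_near.
Qed.

End Series.

Section MDPlemmas.
Variables (R : realType) (nS nA : nat).
Variables (P : 'I_nS -> 'I_nA -> 'I_nS -> R) (Rw : 'I_nS -> 'I_nA -> R).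

Lemma Ppi_stoch (pi : 'M[R]_(nS, nA)) :
  is_kernel P -> is_policy pi -> stoch (Ppi P pi).
Proof.
move=> [P0 P1] [pi0 pi1]; split.
  by move=> i j; rewrite mxE; apply: sumr_ge0 => b _; rewrite mulr_ge0.
move=> i; under eq_bigr => j _ do rewrite mxE.
rewrite exchange_big /=.
under eq_bigr => b _ do rewrite -mulr_sumr P1 mulr1.
exact: pi1.
Qed.

Lemma rpi_bound (pi : 'M[R]_(nS, nA)) :
  (forall s a, 0 <= Rw s a <= 1) -> is_policy pi ->
  forall i, `|rpi Rw pi i 0| <= 1.
Proof.
move=> Rb [pi0 pi1] i; rewrite mxE.
have H0 : 0 <= \sum_a pi i a * Rw i a.
  by apply: sumr_ge0 => b _; rewrite mulr_ge0 //; case/andP: (Rb i b).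
rewrite ger0_norm // -(pi1 i); apply: ler_sum => b _.
by rewrite ler_piMr //; case/andP: (Rb i b).
Qed.

Lemma Ppi_lin (X Z : 'M[R]_(nS, nA)) (t : R) :
  Ppi P (X + t *: Z) = Ppi P X + t *: Ppi P Z.
Proof.
apply/matrixP => i j; rewrite !mxE mulr_sumr -big_split /=.
by apply: eq_bigr => b _; rewrite !mxE mulrDl mulrA.
Qed.

Lemma rpi_lin (X Z : 'M[R]_(nS, nA)) (t : R) :
  rpi Rw (X + t *: Z) = rpi Rw X + t *: rpi Rw Z.
Proof.
apply/matrixP => i j; rewrite !mxE mulr_sumr -big_split /=.
by apply: eq_bigr => b _; rewrite !mxE mulrDl mulrA.
Qed.

Lemma Ppi_delta s a :
  Ppi P (delta_mx s a) = (delta_mx s (0 : 'I_1)) *m (\row_j P s a j).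
Proof.
apply/matrixP => i j; rewrite !mxE big_ord1 !mxE eqxx andbT.
case: (eqVneq i s) => [->|ns] /=.
  rewrite (bigD1 a) //= !mxE !eqxx mul1r big1 ?addr0 ?mul1r //.
  by move=> b /negbTE nb; rewrite mxE eqxx nb mul0r.
by rewrite big1 ?mul0r // => b _; rewrite mxE (negbTE ns) mul0r.
Qed.

Lemma rpi_delta s a :
  rpi Rw (delta_mx s a) = Rw s a *: (delta_mx s (0 : 'I_1)).
Proof.
apply/matrixP => i j; rewrite !mxE (ord1 j) eqxx andbT.
case: (eqVneq i s) => [->|ns] /=.
  rewrite (bigD1 a) //= !mxE !eqxx mul1r big1 ?addr0 ?mulr1 //.
  by move=> b /negbTE nb; rewrite mxE eqxx nb mul0r.
by rewrite big1 ?mulr0 // => b _; rewrite mxE (negbTE ns) mul0r.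
Qed.

End MDPlemmas.

Section Grad.
Variables (R : realType) (nS nA : nat).
Variables (P : 'I_nS -> 'I_nA -> 'I_nS -> R) (Rw : 'I_nS -> 'I_nA -> R).

Lemma mx00D (A B : 'M[R]_1) : (A + B) 0 0 = A 0 0 + B 0 0.
Proof. by rewrite mxE. Qed.
Lemma mx00Z (a : R) (A : 'M[R]_1) : (a *: A) 0 0 = a * A 0 0.
Proof. by rewrite mxE. Qed.
Lemma mx00M (A B : 'M[R]_1) : (A *m B) 0 0 = A 0 0 * B 0 0.
Proof. by rewrite mxE big_ord1. Qed.

Lemma grad_formula (gamma : R) (p : 'rV[R]_nS) (pi : 'M[R]_(nS, nA)) s a :
  is_kernel P -> 0 <= gamma -> gamma < 1 -> is_policy pi ->
  gradVp P Rw gamma p pi s a =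
  - ((p *m invmx (1%:M - gamma *: Ppi P pi)) 0 s *
     (Rw s a + gamma * \sum_j P s a j *
        (invmx (1%:M - gamma *: Ppi P pi) *m rpi Rw pi) j 0)).
Proof.
move=> kerP g0 g1 pol.
have sA := Ppi_stoch kerP pol.
set A := Ppi P pi.
set Mx := 1%:M - gamma *: A.
have uM := unit_IgA sA g0 g1.
set X := invmx Mx.
have HX : Mx *m X = 1%:M by exact: mulmxV.
set es := delta_mx s (0 : 'I_1) : 'cV[R]_nS.
set q := \row_j P s a j : 'rV[R]_nS.
set E := es *m q.
set r := rpi Rw pi.
set w := Rw s a.
set c := (q *m X *m es) 0 0.
set d := (p *m X *m es) 0 0.
set gg := (q *m X *m r) 0 0.
set F0 := (p *m X *m r) 0 0.
set D := d * (w + gamma * gg).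
have Eij : forall i j, E i j = (i == s)%:R * P s a j.
  by move=> i j; rewrite !mxE big_ord1 !mxE eqxx andbT.
have EXE : E *m X *m E = c *: E.
  rewrite /E (_ : es *m q *m X *m (es *m q) = es *m (q *m X *m es) *m q); last by rewrite !mulmxA.
  by rewrite [q *m X *m es]mx11_scalar mul_mx_scalar -scalemxAl.
have key : forall t : R, gamma * (1 + `|t|) < 1 -> 1 - t * gamma * c != 0 ->
    Vp P Rw gamma p (pi + t *: delta_mx s a) = - (F0 + t * D / (1 - t * gamma * c)).
  move=> t gt1 ct.
  set k := t * gamma / (1 - t * gamma * c).
  set Y := X + k *: (X *m E *m X).
  have HY : (1%:M - gamma *: (A + t *: E)) *m Y = 1%:M.
    have -> : 1%:M - gamma *: (A + t *: E) = Mx - (gamma * t) *: E.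
      by rewrite scalerDr scalerA opprD addrA.
    have L1 : Mx *m Y = 1%:M + k *: (E *m X).
      by rewrite /Y mulmxDr -scalemxAr !mulmxA HX mul1mx.
    have L2 : ((gamma * t) *: E) *m Y = (gamma * t + gamma * t * k * c) *: (E *m X).
      rewrite -scalemxAl /Y mulmxDr -scalemxAr (mulmxA E (X *m E) X) (mulmxA E X E) EXE -scalemxAl.
      by rewrite scalerA scalerDr scalerA scalerDl mulrA.
    rewrite mulmxBl L1 L2 -addrA -scalerBl.
    have -> : k - (gamma * t + gamma * t * k * c) = 0.
      rewrite /k; field; exact: ct.
    by rewrite scale0r addr0.
  rewrite /Vp /= Ppi_lin rpi_lin Ppi_delta rpi_delta -/A -/E -/r -/w -/es -/q.
  have [P0 P1] := kerP.
  have [A0 A1] := sA.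
  have Bb : forall i, \sum_j `|(A + t *: E) i j| <= 1 + `|t|.
    move=> i.
    apply: (@le_trans _ _ (\sum_j (A i j + `|t| * ((i == s)%:R * P s a j)))).
      apply: ler_sum => j _.
      rewrite (_ : (A + t *: E) i j = A i j + t * E i j); last by rewrite !mxE.
      apply: le_trans (ler_normD _ _) _.
      by rewrite (ger0_norm (A0 i j)) normrM Eij (ger0_norm (_ : 0 <= _ * _)) ?mulr_ge0 ?ler0n.
    rewrite big_split /= A1 -mulr_sumr -mulr_sumr P1 mulr1 lerD2l.
    by rewrite ler_piMr // lern1 leq_b1.
  rewrite (series_lim (b := 1 + `|t|) p (r + t *: (w *: es)) g0 Bb _ gt1 HY); last by rewrite addr_ge0.
  congr (- _).
  rewrite /Y !mulmxDr !mulmxDl.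
  rewrite -!scalemxAr -!scalemxAl -?scalemxAr !mx00D !mx00Z !mulmxA.
  have e1 : (p *m X *m es *m q *m X *m r) 0 0 = d * gg by rewrite /d /gg -mx00M !mulmxA.
  have e2 : (p *m X *m es *m q *m X *m es) 0 0 = d * c by rewrite /d /c -mx00M !mulmxA.
  rewrite e1 e2 -/F0 -/d /k /D.
  field; exact: ct.
have gform : (p *m X) 0 s * (w + gamma * \sum_j P s a j * (X *m r) j 0) = D.
  rewrite /D /d /gg; congr (_ * (_ + gamma * _)).
    by rewrite /es -colE [RHS]mxE.
  rewrite -mulmxA [RHS]mxE; apply: eq_bigr => j _; congr (_ * _); by rewrite mxE.
rewrite gform.
have e1 : 0 < 1 - gamma by rewrite subr_gt0.
have e2 : 0 < (1 + `|gamma * c|)^-1.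
  by rewrite invr_gt0; have := normr_ge0 (gamma * c); lra.
have cond : forall h, `|h| < 1 - gamma -> `|h| < (1 + `|gamma * c|)^-1 ->
    gamma * (1 + `|h|) < 1 /\ 1 - h * gamma * c != 0.
  move=> h h1 h2; split.
    have := normr_ge0 h; nra.
  have h2' : `|h| * (1 + `|gamma * c|) < 1.
    by move: h2; rewrite -div1r ltr_pdivlMr //; have := normr_ge0 (gamma * c); lra.
  apply/eqP => H.
  have H1 : h * gamma * c = 1 by lra.
  have : `|h * gamma * c| = 1 by rewrite H1 normr1.
  rewrite -mulrA normrM => H3.
  have := normr_ge0 h; have := normr_ge0 (gamma * c); nra.
rewrite /gradVp mxE /derive1.
set f := fun t : R => Vp P Rw gamma p (pi + t *: delta_mx s a).
apply: cvg_lim => //.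
have L : ((fun h : R => - (D / (1 - h * gamma * c))) @ 0^' --> - D)%classic.
  apply: cvg_within_filter.
  have -> : - D = - (D / (1 - 0 * gamma * c)) by rewrite !mul0r subr0 divr1.
  apply: cvgN; apply: cvgMl_tmp; apply: cvgV; first by rewrite !mul0r subr0 oner_neq0.
  apply: cvgB; first exact: cvg_cst.
  apply: cvgMr_tmp; apply: cvgMr_tmp; exact: cvg_id.
apply: cvg_trans _ L.
apply: near_eq_cvg.
near=> h.
have hn0 : h != 0 by near: h; exact: nbhs_dnbhs_neq.
have [c1 c2] : gamma * (1 + `|h|) < 1 /\ 1 - h * gamma * c != 0.
  apply: cond.
    by near: h; exact: (nbhs_dnbhs (nbhs0_lt e1)).
  by near: h; exact: (nbhs_dnbhs (nbhs0_lt e2)).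
have [c3 c4] : gamma * (1 + `|0:R|) < 1 /\ 1 - 0 * gamma * c != 0 by apply: cond; rewrite normr0.
rewrite /= addr0 /f key // key //.
rewrite /GRing.scale /=.
field.
by rewrite hn0 c2.
Unshelve. all: by end_near.
Qed.
End Grad.

Section Main.
Variables (R : realType) (nS nA : nat).
Variables (P : 'I_nS -> 'I_nA -> 'I_nS -> R) (Rw : 'I_nS -> 'I_nA -> R).

Lemma mxBE m k (A B : 'M[R]_(m, k)) i j : (A - B) i j = A i j - B i j.
Proof. by rewrite !mxE. Qed.

Lemma mxZE m k (a : R) (A : 'M[R]_(m, k)) i j : (a *: A) i j = a * A i j.
Proof. by rewrite mxE. Qed.
Lemma mxME m k l (A : 'M[R]_(m, k)) (B : 'M[R]_(k, l)) i j :
  (A *m B) i j = \sum_x A i x * B x j.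
Proof. by rewrite mxE. Qed.
Lemma mxDE m k (A B : 'M[R]_(m, k)) i j : (A + B) i j = A i j + B i j.
Proof. by rewrite mxE. Qed.

Lemma mx_id1 m k (r r' a b c : 'M[R]_(m, k)) :
  r + a - (r' + b) = r - r' + (c - b) + (a - c).
Proof. by apply/matrixP => i j; rewrite !mxE; ring. Qed.
Lemma mx_id2 m k (p a b c : 'M[R]_(m, k)) :
  p + a - (p + b) = (a - c) + (c - b).
Proof. by apply/matrixP => i j; rewrite !mxE; ring. Qed.

Lemma A_diff (pi pi' : 'M[R]_(nS, nA)) i k :
  (Ppi P pi - Ppi P pi') i k = \sum_a (pi - pi') i a * P i a k.
Proof. by rewrite !mxE -sumrB; apply: eq_bigr => b _; rewrite !mxE mulrBl. Qed.

Lemma r_diff (pi pi' : 'M[R]_(nS, nA)) i :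
  (rpi Rw pi - rpi Rw pi') i 0 = \sum_a (pi - pi') i a * Rw i a.
Proof. by rewrite !mxE -sumrB; apply: eq_bigr => b _; rewrite !mxE mulrBl. Qed.

Lemma policy_facts (gamma : R) (p : 'rV[R]_nS) (pi : 'M[R]_(nS, nA)) :
  is_kernel P -> (forall s a, 0 <= Rw s a <= 1) -> 0 <= gamma -> gamma < 1 ->
  is_distr p -> is_policy pi ->
  let A := Ppi P pi in let X := invmx (1%:M - gamma *: A) in
  [/\ p *m X = p + gamma *: (p *m X *m A),
      X *m rpi Rw pi = rpi Rw pi + gamma *: (A *m (X *m rpi Rw pi)),
      \sum_j `|(p *m X) 0 j| <= (1 - gamma)^-1 &
      forall i, `|(X *m rpi Rw pi) i 0| <= (1 - gamma)^-1].
Proof.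
move=> kerP Rb g0 g1 [p0 p1] pol A X.
have sA : stoch A := Ppi_stoch kerP pol.
have uM := unit_IgA sA g0 g1.
have H1 : p *m X = p + gamma *: (p *m X *m A).
  have : p *m X *m (1%:M - gamma *: A) = p by rewrite -mulmxA mulVmx // mulmx1.
  by rewrite mulmxBr mulmx1 -scalemxAr => /eqP; rewrite subr_eq => /eqP.
have H2 : X *m rpi Rw pi = rpi Rw pi + gamma *: (A *m (X *m rpi Rw pi)).
  have : (1%:M - gamma *: A) *m (X *m rpi Rw pi) = rpi Rw pi by rewrite mulmxA mulmxV // mul1mx.
  by rewrite mulmxBl mul1mx -scalemxAl => /eqP; rewrite subr_eq => /eqP.
have p1' : \sum_j `|p 0 j| = 1 by rewrite -p1; apply: eq_bigr => j _; rewrite ger0_norm.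
split => //.
  by have := row_contract sA g0 g1 H1; rewrite p1' div1r.
move=> i; rewrite -[(1 - gamma)^-1]div1r.
apply: (col_contract sA g0 g1 ler01 _ H2).
exact: rpi_bound.
Qed.


Lemma main_ineq (gamma : R) (p : 'rV[R]_nS) (pi pi' : 'M[R]_(nS, nA)) :
  is_kernel P ->
  (forall s a, 0 <= Rw s a <= 1) ->
  0 <= gamma -> gamma < 1 ->
  is_distr p ->
  is_policy pi -> is_policy pi' ->
  norm2inf (gradVp P Rw gamma p pi - gradVp P Rw gamma p pi')
    <= 2 * gamma / (1 - gamma) ^+ 3 * norm21 (pi - pi').
Proof.
move=> kerP Rb g0 g1 pd pol pol'.
have [P0 P1] := kerP.
have sA := Ppi_stoch kerP pol.
have sA' := Ppi_stoch kerP pol'.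
have [Hd Hv Nd Bv] := policy_facts kerP Rb g0 g1 pd pol.
have [Hd' Hv' Nd' Bv'] := policy_facts kerP Rb g0 g1 pd pol'.
have G := fun s a => grad_formula Rw p s a kerP g0 g1 pol.
have G' := fun s a => grad_formula Rw p s a kerP g0 g1 pol'.
set A := Ppi P pi in sA Hd Hv Nd Bv G.
set A' := Ppi P pi' in sA' Hd' Hv' Nd' Bv' G'.
set X := invmx (1%:M - gamma *: A) in Hd Hv Nd Bv G.
set X' := invmx (1%:M - gamma *: A') in Hd' Hv' Nd' Bv' G'.
set r := rpi Rw pi in Hv Bv G.
set r' := rpi Rw pi' in Hv' Bv' G'.
set d := p *m X in Hd Nd G.
set d' := p *m X' in Hd' Nd' G'.
set v := X *m r in Hv Bv G.
set v' := X' *m r' in Hv' Bv' G'.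
set u := (1 - gamma)^-1 in Nd Bv Nd' Bv'.
have u0 : 0 < u by rewrite invr_gt0 subr_gt0.
have uE : (1 - gamma) * u = 1 by rewrite mulfV // subr_eq0 eq_sym lt_eqF.
set Q := fun s a => Rw s a + gamma * \sum_j P s a j * v j 0.
set Q' := fun s a => Rw s a + gamma * \sum_j P s a j * v' j 0.
have QB : forall (w : 'cV[R]_nS) s a, (forall j, `|w j 0| <= u) ->
    `|Rw s a + gamma * \sum_j P s a j * w j 0| <= u.
  move=> w s a wB.
  apply: le_trans (ler_normD _ _) _.
  have H1 : `|Rw s a| <= 1 by case/andP: (Rb s a) => h0 h1; rewrite ger0_norm.
  have H2 : `|gamma * \sum_j P s a j * w j 0| <= gamma * u.
    rewrite normrM ger0_norm // ler_wpM2l //.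
    apply: le_trans (ler_norm_sum _ _ _) _.
    rewrite -[u]mul1r -(P1 s a) mulr_suml; apply: ler_sum => j _.
    by rewrite normrM ger0_norm // ler_wpM2l.
  have : 1 + gamma * u = u by rewrite -[X in X + _]uE; ring.
  lra.
set N := norm21 (pi - pi').
set dl := fun s => \sum_a `|(pi - pi') s a|.
have dN : forall s, dl s <= N.
  move=> s; rewrite /N /norm21.
  have dl0 : 0 <= dl s by apply: sumr_ge0.
  rewrite -(ger0_norm dl0) -sqrtr_sqr ler_sqrt; last by apply: sumr_ge0 => i _; exact: sqr_ge0.
  exact: (@le_sum_term _ _ (fun i => (\sum_a `|(pi - pi') i a|) ^+ 2) s (fun i => sqr_ge0 _)).
have N0 : 0 <= N by apply: sqrtr_ge0.
set z := r - r' + gamma *: ((A - A') *m v').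
have zi : forall i, z i 0 = \sum_a (pi - pi') i a * Q' i a.
  move=> i; rewrite /z mxDE r_diff mxZE mxME /A /A'.
  rewrite [X in gamma * X](eq_bigr (fun k => (\sum_a (pi - pi') i a * P i a k) * v' k 0)); last by move=> k _; rewrite A_diff.
  rewrite /Q'; under [RHS]eq_bigr => b _ do rewrite mulrDr.
  rewrite big_split /=; congr (_ + _).
  rewrite mulr_sumr.
  transitivity (\sum_k \sum_b gamma * ((pi - pi') i b * P i b k * v' k 0)).
    apply: eq_bigr => k _; rewrite mulr_suml mulr_sumr; apply: eq_bigr => b _; ring.
  rewrite exchange_big /=; apply: eq_bigr => b _.
  rewrite !mulr_sumr; apply: eq_bigr => k _; ring.
have zB : forall i, `|z i 0| <= N * u.
  move=> i; rewrite zi.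
  apply: le_trans (ler_norm_sum _ _ _) _.
  apply: (@le_trans _ _ (dl i * u)); last by rewrite ler_wpM2r // ltW.
  rewrite /dl mulr_suml; apply: ler_sum => b _; rewrite normrM ler_wpM2l //.
  exact: (QB v' i b Bv').
have vdiff : v - v' = z + gamma *: (A *m (v - v')).
  rewrite {1}Hv {1}Hv' /z mulmxBl mulmxBr !scalerBr.
  exact: mx_id1.
have Bvv : forall i, `|(v - v') i 0| <= N * u * u.
  move=> i; have := col_contract sA g0 g1 (mulr_ge0 N0 (ltW u0)) zB vdiff i; by rewrite -/u.
have Qdiff : forall s a, `|Q s a - Q' s a| <= gamma * (N * u * u).
  move=> s a; rewrite /Q /Q' opprD addrACA subrr add0r -mulrBr -sumrB.
  rewrite normrM ger0_norm // ler_wpM2l //.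
  apply: le_trans (ler_norm_sum _ _ _) _.
  rewrite -[X in _ <= X]mul1r -(P1 s a) mulr_suml; apply: ler_sum => j _.
  rewrite -mulrBr normrM ger0_norm // ler_wpM2l //.
  by have := Bvv j; rewrite mxBE.
set e := d - d'.
set y := gamma *: (d *m (A - A')).
have ediff : e = y + gamma *: (e *m A').
  rewrite /e {1}Hd {1}Hd' /y mulmxBr mulmxBl !scalerBr.
  exact: mx_id2.
have Ny : \sum_j `|y 0 j| <= gamma * (N * u).
  apply: (@le_trans _ _ (gamma * \sum_j \sum_s `|d 0 s| * \sum_a `|(pi - pi') s a| * P s a j)).
    rewrite mulr_sumr; apply: ler_sum => j _.
    rewrite mxZE normrM ger0_norm // ler_wpM2l // mxME.
    apply: le_trans (ler_norm_sum _ _ _) _; apply: ler_sum => s _.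
    rewrite A_diff normrM ler_wpM2l //.
    apply: le_trans (ler_norm_sum _ _ _) _; apply: ler_sum => a _.
    by rewrite normrM (ger0_norm (P0 s a j)).
  rewrite ler_wpM2l // exchange_big /=.
  apply: (@le_trans _ _ (\sum_s `|d 0 s| * N)); last first.
    by rewrite -mulr_suml mulrC ler_wpM2l.
  apply: ler_sum => s _; rewrite -mulr_sumr ler_wpM2l //.
  apply: le_trans (dN s); rewrite /dl exchange_big /=; apply: ler_sum => a _.
  by rewrite -mulr_sumr P1 mulr1.
have Ne : \sum_j `|e 0 j| <= gamma * (N * u) * u.
  have := row_contract sA' g0 g1 ediff; rewrite -/u => H.
  by apply: le_trans H _; rewrite ler_wpM2r // ltW.
set m := fun s => `|e 0 s| * u + `|d' 0 s| * (gamma * (N * u * u)).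
have m0 : forall s, 0 <= m s.
  move=> s; rewrite /m; apply: addr_ge0; apply: mulr_ge0 => //; first exact: ltW.
  by rewrite !mulr_ge0 // ltW.
have Mb : forall s, \big[Num.max/0]_a `|(gradVp P Rw gamma p pi - gradVp P Rw gamma p pi') s a| <= m s.
  move=> s; apply: bigmax_le => // a _.
  rewrite mxBE G G'.
  rewrite (_ : forall x y z w : R, - (x * y) - - (z * w) = - ((x - z) * y + z * (y - w))); last by move=> *; ring.
  rewrite normrN; apply: le_trans (ler_normD _ _) _.
  rewrite /m !normrM; apply: lerD.
    rewrite -mxBE -/e ler_wpM2l //; exact: (QB v s a Bv).
  by rewrite ler_wpM2l //; exact: (Qdiff s a).
set K := 2 * gamma / (1 - gamma) ^+ 3 * N.
have KE : K = 2 * gamma * N * u ^+ 3 by rewrite /K -exprVn -/u; ring.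
have K0 : 0 <= K by rewrite KE !mulr_ge0 // ?exprn_ge0 // ltW.
have Sm : \sum_s m s <= K.
  rewrite /m big_split /= -!mulr_suml KE.
  have h1 : 0 <= gamma * (N * u * u) by rewrite !mulr_ge0 // ltW.
  have h2 := Nd'.
  have h3 : 0 <= \sum_j `|e 0 j| by apply: sumr_ge0.
  have h4 : 0 <= \sum_j `|d' 0 j| by apply: sumr_ge0.
  have h5 : (\sum_j `|e 0 j|) * u <= gamma * (N * u) * u * u by rewrite ler_wpM2r // ltW.
  have h6 : (\sum_j `|d' 0 j|) * (gamma * (N * u * u)) <= u * (gamma * (N * u * u)) by rewrite ler_wpM2r.
  rewrite (_ : 2 * gamma * N * u ^+ 3 = gamma * (N * u) * u * u + u * (gamma * (N * u * u))); last by ring.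
  exact: lerD.
rewrite /norm2inf.
suff HS : \sum_s (\big[Num.max/0]_a `|(gradVp P Rw gamma p pi - gradVp P Rw gamma p pi') s a|) ^+ 2 <= K ^+ 2.
  by rewrite -(ger0_norm K0) -sqrtr_sqr ler_sqrt // sqr_ge0.
apply: (@le_trans _ _ (\sum_s m s ^+ 2)).
  apply: ler_sum => s _; rewrite !expr2; apply: ler_pM => //; try exact: Mb.
    by elim/big_ind: _ => // x1 y1 x0 y0; rewrite le_max x0.
  by elim/big_ind: _ => // x1 y1 x0 y0; rewrite le_max x0.
apply: (@le_trans _ _ ((\sum_s m s) ^+ 2)); last first.
  by rewrite !expr2 ler_pM // sumr_ge0.
rewrite [X in _ <= X]expr2 mulr_suml; apply: ler_sum => s _.
rewrite expr2 ler_wpM2l //.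
exact: (@le_sum_term _ _ m s m0).
Qed.

End Main.


Unset Implicit Arguments.

Theorem proposition1 (R : realType) (nS nA : nat)
  (P : 'I_nS -> 'I_nA -> 'I_nS -> R) (Rw : 'I_nS -> 'I_nA -> R)
  (gamma : R) (p : 'rV[R]_nS) (pi pi' : 'M[R]_(nS, nA)) :
  is_kernel P ->
  (forall s a, 0 <= Rw s a <= 1) ->
  0 <= gamma -> gamma < 1 ->
  is_distr p ->
  is_policy pi -> is_policy pi' ->
  norm2inf (gradVp P Rw gamma p pi - gradVp P Rw gamma p pi')
    <= 2 * gamma / (1 - gamma) ^+ 3 * norm21 (pi - pi').
Proof.
move=> kerP Rb g0 g1 pd pol pol'.
exact: main_ineq kerP Rb g0 g1 pd pol pol'.
Qed.
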